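(* Let $n\ge 6$ and let $H_1$ be the $3$-graph on $[n]$ with edge set $\big(E(B(2,n-2))\setminus\{2ij: i,j\in[n]\setminus\{1,2,3,4,5,6\}\}\big)\cup\{345,346\}$. Then $\lambda(H_1)<\frac{\sqrt3}{18}$.
   Context: $B(2,n-2)$ is the $3$-graph on $[n]$ whose edge set is $\{e\in\binom{[n]}3: e\cap\{1,2\}\neq\emptyset\}$. For a $3$-graph $G$ on $[n]$, $\lambda(G)=\max\{\sum_{e\in E(G)}\prod_{i\in e}x_i:\sum_i x_i=1,x_i\ge0\}$. *)

(* Defs.v *)
From HB Require Import structures.
From mathcomp Require Import all_boot all_order all_algebra.
From mathcomp Require Import classical_sets reals.
Set Implicit Arguments. Unset Strict Implicit. Unset Printing Implicit Defensive.
Import Order.TTheory GRing.Theory Num.Theory.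
Local Open Scope ring_scope.
Local Open Scope classical_set_scope.

(* Vertex set [n] = {1,...,n} is represented by 'I_n; the ordinal i stands
   for the vertex with label i+1. *)
Definition lab n (i : 'I_n) : nat := (i : nat).+1.

Definition simplex (R : realType) n : set ('I_n -> R) :=
  [set x | (forall i, 0 <= x i) /\ \sum_(i < n) x i = 1].

Definition lag_poly (R : realType) n (G : {set {set 'I_n}}) (x : 'I_n -> R) : R :=
  \sum_(e in G) \prod_(i in e) x i.

Definition lagrangian (R : realType) n (G : {set {set 'I_n}}) : R :=
  sup [set lag_poly G x | x in @simplex R n].

Definition vset n (s : seq nat) : {set 'I_n} := [set i : 'I_n | lab i \in s].

Definition B2 n : {set {set 'I_n}} :=
  [set e : {set 'I_n} | (#|e| == 3%N) && [exists i in e, (lab i <= 2)%N]].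

Definition removed2 n : {set {set 'I_n}} :=
  [set e : {set 'I_n} | (#|e| == 3%N) && [exists i in e, lab i == 2%N]
     && [forall j in e, (lab j == 2%N) || (6 < lab j)%N]].

Definition H1 n : {set {set 'I_n}} :=
  (B2 n :\: removed2 n) :|: [set vset n [:: 3; 4; 5]%N; vset n [:: 3; 4; 6]%N].

(* Main.v *)
Require Import Defs.
From mathcomp Require Import all_boot all_order all_algebra.
From mathcomp Require Import classical_sets reals.
From mathcomp Require Import zify ring lra.
Import Order.TTheory GRing.Theory Num.Theory.
Set Implicit Arguments. Unset Strict Implicit. Unset Printing Implicit Defensive.


Section S.
Variable n : nat.
Definition ordlt : rel 'I_n := fun u v => (val u < val v)%N.
Lemma ordlt_trans : transitive ordlt.
Proof. move=> a b c; rewrite /ordlt; exact: ltn_trans. Qed.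
Lemma ordlt_irr : irreflexive ordlt.
Proof. move=> a; rewrite /ordlt; exact: ltnn. Qed.

Lemma sorted_enum_set (e : {set 'I_n}) : sorted ordlt (enum e).
Proof.
have h1 : sorted ordlt (enum 'I_n).
  by have := iota_ltn_sorted 0 n; rewrite -val_enum_ord sorted_map.
rewrite /enum_mem -enumT. apply: sorted_filter => //; exact: ordlt_trans.
Qed.

Lemma enum3 (e : {set 'I_n}) : #|e| = 3%N ->
  exists i j k, enum e = [:: i; j; k] /\ (val i < val j)%N /\ (val j < val k)%N.
Proof.
move=> he. have := sorted_enum_set e. rewrite cardE in he.
case: (enum e) he => [|i [|j [|k [|l s]]]] //= _ /and3P [hij hjk _].
by exists i, j, k.
Qed.

Lemma enum_set3 (i j k : 'I_n) : (val i < val j)%N -> (val j < val k)%N ->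
  enum [set i; j; k] = [:: i; j; k].
Proof.
move=> hij hjk. apply: (irr_sorted_eq ordlt_trans ordlt_irr).
- exact: sorted_enum_set.
- by rewrite /= /ordlt hij hjk.
- by move=> x; rewrite mem_enum !inE orbA.
Qed.

Lemma set3_enum (e : {set 'I_n}) i j k : enum e = [:: i; j; k] -> e = [set i; j; k].
Proof.
move=> h; apply/setP => x. by rewrite -mem_enum h !inE orbA.
Qed.

End S.
Local Open Scope ring_scope.
Lemma sum3 (R : nmodType) n (G : {set {set 'I_n.+1}}) (F : {set 'I_n.+1} -> R) :
  (forall e, e \in G -> #|e| = 3%N) ->
  \sum_(e in G) F e = \sum_i \sum_j \sum_k
     (if ((val i < val j) && (val j < val k))%N && ([set i; j; k] \in G)
      then F [set i; j; k] else 0).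
Proof.
move=> hG.
pose h := fun t : 'I_n.+1 * 'I_n.+1 * 'I_n.+1 => [set t.1.1; t.1.2; t.2].
pose h' := fun e : {set 'I_n.+1} =>
  (nth ord0 (enum e) 0, nth ord0 (enum e) 1, nth ord0 (enum e) 2).
rewrite (reindex_onto h h'); last first.
  move=> e /hG /enum3 [i [j [k [he _]]]]; rewrite /h /h' he /=.
  exact: (esym (set3_enum he)).
rewrite [RHS]pair_bigA [RHS]pair_bigA big_mkcond /=.
apply: eq_bigr => [[[i j] k]] _ /=.
congr (if _ then _ else _).
rewrite /h /=.
case hs: ((val i < val j) && (val j < val k))%N.
  move/andP: hs => [hij hjk].
  by rewrite /h' /= enum_set3 //= eqxx andbT.
case hin: ([set i; j; k] \in G) => //=.
apply/negP => /eqP Eh.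
have := hG _ hin => /enum3 [i' [j' [k' [he [h1 h2]]]]].
move: Eh; rewrite /h' /= he /= => -[e1 e2 e3]; subst.
by rewrite h1 h2 in hs.
Qed.

Local Open Scope ring_scope.

Definition cc (i j k : nat) : bool :=
  [|| i == 0, (i == 1) && (2 <= j <= 5) | (i == 2) && (j == 3) && ((k == 4) || (k == 5))]%N.

Lemma memH1 n (i j k : 'I_n) : (i < j)%N -> (j < k)%N ->
  [set i; j; k] \in H1 n -> cc i j k.
Proof.
move=> hij hjk. rewrite /H1 /B2 /removed2 !inE.
case/orP => [/andP [hnot /andP [h3 /existsP [l /andP [hl hlab]]]] | hv].
- move: hl hlab; rewrite !inE /lab => hl hlab.
  have hi1 : (i <= 1)%N by move: hl => /orP [/orP [] | ] /eqP Hl; subst l; lia.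
  case: (nat_of_ord i =P 0)%N => [-> //| hi0].
  have hi : nat_of_ord i = 1%N by lia.
  move: hnot; rewrite h3 /=.
  have -> : [exists i0 in [set i; j; k], lab i0 == 2] .
    apply/existsP; exists i; by rewrite !inE eqxx /lab hi.
  rewrite /= => /forallPn [l' ]; rewrite negb_imply !inE /lab => /andP [hl' hlab'].
  rewrite /cc hi /=.
  move: hl' hlab' => /orP [/orP [] | ] /eqP Hl hlab'; subst l'; rewrite ?hi in hlab' *; lia.
- have : [/\ i \in [set i; j; k], j \in [set i; j; k] & k \in [set i; j; k]].
    by rewrite !inE !eqxx ?orbT.
  move: hv => /orP [] /eqP ->; rewrite /vset !inE /lab => -[h1 h2 h3]; rewrite /cc; lia.
Qed.

Lemma card_vset n (a b c : nat) (ha : (a < n)%N) (hb : (b < n)%N) (hc : (c < n)%N) :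
  (a < b)%N -> (b < c)%N -> #|vset n [:: a.+1; b.+1; c.+1]| = 3%N.
Proof.
move=> hab hbc.
have -> : vset n [:: a.+1; b.+1; c.+1] = [set Ordinal ha; Ordinal hb; Ordinal hc].
  apply/setP => x; rewrite /vset !inE /lab -!val_eqE /= !eqSS. by rewrite orbA.
by rewrite cardE enum_set3.
Qed.

Lemma cardH1 n : (6 <= n)%N -> forall e, e \in H1 n -> #|e| = 3%N.
Proof.
move=> hn e; rewrite /H1 /B2 !inE => /orP [/andP [_ /andP [/eqP h _]] // | /orP [] /eqP ->].
- have := @card_vset n 2 3 4; apply; lia.
- have := @card_vset n 2 3 5; apply; lia.
Qed.

Section Nat.
Variable R : realFieldType.

Lemma sum6 n (F : nat -> R) : (6 <= n)%N ->
  \sum_(0 <= i < n) F i = F 0%N + F 1%N + F 2%N + F 3%N + F 4%N + F 5%N + \sum_(6 <= i < n) F i.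
Proof.
move=> hn; rewrite (big_cat_nat (n:=6)) //=; congr (_ + _).
by rewrite big_ltn // big_ltn // big_ltn // big_ltn // big_ltn // big_ltn // big_geq // addr0 !addrA.
Qed.

Lemma sum_tail0 m n (F : nat -> R) : (forall i, (m <= i)%N -> F i = 0) ->
  \sum_(m <= i < n) F i = 0.
Proof.
move=> H; rewrite big_nat_cond big1 // => i /andP [/andP [h _] _]; exact: H.
Qed.

Lemma E2 (y : nat -> R) lo n : (lo <= n)%N ->
  (\sum_(lo <= j < n) y j) ^+ 2 = \sum_(lo <= j < n) y j ^+ 2 +
    2 * \sum_(lo <= j < n) \sum_(0 <= k < n) (if (j < k)%N then y j * y k else 0).
Proof.
elim: n => [|n IH] hn.
  have -> : lo = 0%N by lia.
  by rewrite !big_geq // expr0n /= mulr0 addr0.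
case: (ltnP n lo) => hlo.
  have -> : lo = n.+1 by lia.
  by rewrite !big_geq // expr0n /= mulr0 addr0.
have S1 : \sum_(lo <= j < n.+1) y j = \sum_(lo <= j < n) y j + y n by rewrite big_nat_recr.
have Q1 : \sum_(lo <= j < n.+1) y j ^+ 2 = \sum_(lo <= j < n) y j ^+ 2 + y n ^+ 2 by rewrite big_nat_recr.
have E1 : \sum_(lo <= j < n.+1) \sum_(0 <= k < n.+1) (if (j < k)%N then y j * y k else 0) =
  \sum_(lo <= j < n) \sum_(0 <= k < n) (if (j < k)%N then y j * y k else 0) + y n * \sum_(lo <= j < n) y j.
  rewrite big_nat_recr //=.
  have -> : \sum_(0 <= k < n.+1) (if (n < k)%N then y n * y k else 0) = 0.
    by rewrite big_nat_cond big1 // => k /andP [/andP [_ hk] _]; rewrite ifF //; apply/negbTE; lia.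
  rewrite addr0 big_distrr -big_split /=. apply: eq_big_nat => j /andP [_ hj].
  by rewrite big_nat_recr //= ifT // mulrC.
rewrite S1 Q1 E1 sqrrD IH //.
ring.
Qed.

Definition Tt (y : nat -> R) i j k :=
  if [&& (i < j)%N, (j < k)%N & cc i j k] then y i * y j * y k else 0.

Lemma Tge3 y i j k : (3 <= i)%N -> Tt y i j k = 0.
Proof. move=> h; rewrite /Tt ifF //; apply/negbTE; rewrite /cc; lia. Qed.
Lemma T0 y j k : Tt y 0 j k = if ((0 < j) && (j < k))%N then y 0%N * y j * y k else 0.
Proof. rewrite /Tt /cc /=; congr (if _ then _ else _); apply/idP/idP; lia. Qed.
Lemma T1 y j k : Tt y 1 j k = if ((2 <= j <= 5) && (j < k))%N then y 1%N * y j * y k else 0.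
Proof. rewrite /Tt /cc /=; congr (if _ then _ else _); apply/idP/idP; lia. Qed.
Lemma T2 y j k : Tt y 2 j k = if ((j == 3) && ((k == 4) || (k == 5)))%N then y 2%N * y j * y k else 0.
Proof. rewrite /Tt /cc /=; congr (if _ then _ else _); apply/idP/idP; lia. Qed.

Lemma tail_true n (y : nat -> R) c a : (c < 6)%N ->
  \sum_(6 <= k < n) (if (c < k)%N then a * y k else 0) = a * \sum_(6 <= k < n) y k.
Proof.
move=> hc; rewrite big_distrr; apply: eq_big_nat => k /andP [hk _]; rewrite ifT //; lia.
Qed.
End Nat.

Lemma key (R : realFieldType) n (y : nat -> R) : (6 <= n)%N ->
  \sum_(0 <= i < n) \sum_(0 <= j < n) \sum_(0 <= k < n) Tt y i j k =
  y 0%N * (y 1%N * y 2%N + y 1%N * y 3%N + y 1%N * y 4%N + y 1%N * y 5%N + y 2%N * y 3%N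
           + y 2%N * y 4%N + y 2%N * y 5%N + y 3%N * y 4%N + y 3%N * y 5%N + y 4%N * y 5%N
           + (y 1%N + y 2%N + y 3%N + y 4%N + y 5%N) * \sum_(6 <= k < n) y k
           + \sum_(6 <= j < n) \sum_(0 <= k < n) (if (j < k)%N then y j * y k else 0))
  + y 1%N * (y 2%N * y 3%N + y 2%N * y 4%N + y 2%N * y 5%N + y 3%N * y 4%N + y 3%N * y 5%N
           + y 4%N * y 5%N + (y 2%N + y 3%N + y 4%N + y 5%N) * \sum_(6 <= k < n) y k)
  + y 2%N * y 3%N * (y 4%N + y 5%N).
Proof.
move=> hn.
have F2 : \sum_(0 <= j < n) \sum_(0 <= k < n) Tt y 2 j k = y 2%N * y 3%N * (y 4%N + y 5%N).
  under eq_bigr do under eq_bigr do rewrite T2.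
  rewrite sum6 // (sum_tail0 (m:=6)); last first.
    by move=> j hj; rewrite big1 // => k _; rewrite ifF //; apply/negbTE; lia.
  rewrite /= !big1_eq sum6 // (sum_tail0 (m:=6)); last first.
    by move=> k hk; rewrite ifF //; apply/negbTE; lia.
  by rewrite /=; ring.
have F1 : \sum_(0 <= j < n) \sum_(0 <= k < n) Tt y 1 j k =
  y 1%N * (y 2%N * y 3%N + y 2%N * y 4%N + y 2%N * y 5%N + y 3%N * y 4%N + y 3%N * y 5%N
           + y 4%N * y 5%N + (y 2%N + y 3%N + y 4%N + y 5%N) * \sum_(6 <= k < n) y k).
  under eq_bigr do under eq_bigr do rewrite T1.
  rewrite sum6 // (sum_tail0 (m:=6)); last first.
    by move=> j hj; rewrite big1 // => k _; rewrite ifF //; apply/negbTE; lia.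
  rewrite /= !big1_eq !sum6 //= !tail_true //.
  ring.
have F0 : \sum_(0 <= j < n) \sum_(0 <= k < n) Tt y 0 j k =
  y 0%N * (y 1%N * y 2%N + y 1%N * y 3%N + y 1%N * y 4%N + y 1%N * y 5%N + y 2%N * y 3%N
           + y 2%N * y 4%N + y 2%N * y 5%N + y 3%N * y 4%N + y 3%N * y 5%N + y 4%N * y 5%N
           + (y 1%N + y 2%N + y 3%N + y 4%N + y 5%N) * \sum_(6 <= k < n) y k
           + \sum_(6 <= j < n) \sum_(0 <= k < n) (if (j < k)%N then y j * y k else 0)).
  under eq_bigr do under eq_bigr do rewrite T0.
  rewrite sum6 //.
  have -> : \sum_(6 <= j < n) \sum_(0 <= k < n) (if ((0 < j) && (j < k))%N then y 0%N * y j * y k else 0)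
    = y 0%N * \sum_(6 <= j < n) \sum_(0 <= k < n) (if (j < k)%N then y j * y k else 0).
    rewrite big_distrr; apply: eq_big_nat => j /andP [hj _]; rewrite big_distrr.
    apply: eq_bigr => k _; rewrite (_ : (0 < j)%N = true); last by lia.
    by rewrite /=; case: ifP => _; rewrite ?mulr0 ?mulrA.
  set W := \sum_(6 <= j < n) \sum_(0 <= k < n) (if (j < k)%N then y j * y k else 0).
  rewrite /= big1_eq !sum6 //= !tail_true //.
  ring.
rewrite sum6 // (sum_tail0 (m:=6)); last first.
  by move=> i hi; rewrite big1 // => j _; rewrite big1 // => k _; rewrite Tge3 //; lia.
have z3 : forall i, (3 <= i)%N -> \sum_(0 <= j < n) \sum_(0 <= k < n) Tt y i j k = 0.
  by move=> i hi; rewrite big1 // => j _; rewrite big1 // => k _; rewrite Tge3.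
rewrite (z3 3%N) // (z3 4%N) // (z3 5%N) // F0 F1 F2.
ring.
Qed.

Lemma amgm3 (R : realFieldType) (u v w : R) : 0 <= u -> 0 <= v -> 0 <= w ->
  27 * (u * v * w) <= (u + v + w) ^+ 3.
Proof.
move=> hu hv hw.
have E : (u + v + w) ^+ 3 - 27 * (u * v * w) =
  (u + v + w) / 2 * ((u - v) ^+ 2 + (v - w) ^+ 2 + (w - u) ^+ 2)
  + 3 * (u * (v - w) ^+ 2 + v * (u - w) ^+ 2 + w * (u - v) ^+ 2) by field.
rewrite -subr_ge0 E.
have hs : 0 <= (u + v + w) / 2 by lra.
apply: addr_ge0; [apply: mulr_ge0 => //|apply: mulr_ge0; first by lra].
  by rewrite !addr_ge0 ?sqr_ge0.
by rewrite !addr_ge0 // mulr_ge0 // sqr_ge0.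
Qed.

Lemma g_bound (R : realFieldType) (a b Y : R) :
  0 <= a -> 0 <= b -> 0 <= Y -> a + b + Y <= 1 ->
  Y^+2 * (1 - a - 5/8*Y)^+2 <= (2*a + 4*Y) * (19/200 - a*(1-a)^+2/2 + a*Y^+2/8 - Y^+3/27) ->
  a * (b*Y + 3/8*Y^+2 + (b+Y)*(1-a-b-Y) + (1-a-b-Y)^+2/2) + b * (3/8*Y^+2 + Y*(1-a-b-Y)) + Y^+3/27 <= 19/200.
Proof.
move=> ha hb hY habY hD.
set g := (X in X <= _).
have E : (2*a + 4*Y) * (19/200 - g) = ((2*a + 4*Y) * (19/200 - a*(1-a)^+2/2 + a*Y^+2/8 - Y^+3/27) - Y^+2 * (1 - a - 5/8*Y)^+2)
   + (2*(a/2+Y)*b - Y*(1-a-5/8*Y))^+2.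
  by rewrite /g; field.
have h0 : 0 <= (2*a + 4*Y) * (19/200 - g).
  rewrite E; apply: addr_ge0; [by rewrite subr_ge0 | exact: sqr_ge0].
have [hp|hz] := ltrP 0 (2*a + 4*Y).
  by move: h0; rewrite pmulr_rge0 // subr_ge0.
have a0 : a = 0 by lra.
have Y0 : Y = 0 by lra.
rewrite /g a0 Y0; lra.
Qed.

Lemma Vbound (R : realFieldType) (y0 y1 y2 y3 y4 y5 Z W : R) :
  (forall a Y : R, 0 <= a -> 0 <= Y -> a + Y <= 1 ->
    Y^+2 * (1 - a - 5/8*Y)^+2 <= (2*a + 4*Y) * (19/200 - a*(1-a)^+2/2 + a*Y^+2/8 - Y^+3/27)) ->
  0 <= y0 -> 0 <= y1 -> 0 <= y2 -> 0 <= y3 -> 0 <= y4 -> 0 <= y5 -> 0 <= Z ->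
  2 * W <= Z ^+ 2 -> y0 + y1 + y2 + y3 + y4 + y5 + Z = 1 ->
  y0 * (y1 * y2 + y1 * y3 + y1 * y4 + y1 * y5 + y2 * y3
           + y2 * y4 + y2 * y5 + y3 * y4 + y3 * y5 + y4 * y5
           + (y1 + y2 + y3 + y4 + y5) * Z + W)
  + y1 * (y2 * y3 + y2 * y4 + y2 * y5 + y3 * y4 + y3 * y5
           + y4 * y5 + (y2 + y3 + y4 + y5) * Z)
  + y2 * y3 * (y4 + y5) <= 19/200.
Proof.
move=> hD h0 h1 h2 h3 h4 h5 hZ hW hs.
set Y := y2 + y3 + y4 + y5.
set e := y2 * y3 + y2 * y4 + y2 * y5 + y3 * y4 + y3 * y5 + y4 * y5.
have hY : 0 <= Y by rewrite /Y; lra.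
have he : e <= 3/8 * Y ^+ 2.
  have E : 3/8 * Y ^+ 2 - e = ((y2-y3)^+2 + (y2-y4)^+2 + (y2-y5)^+2 + (y3-y4)^+2 + (y3-y5)^+2 + (y4-y5)^+2) / 8.
    by rewrite /Y /e; field.
  rewrite -subr_ge0 E; apply: divr_ge0; last by [].
  by rewrite !addr_ge0 ?sqr_ge0.
have hC : y2 * y3 * (y4 + y5) <= Y ^+ 3 / 27.
  have := amgm3 h2 h3 (addr_ge0 h4 h5). rewrite /Y !addrA. lra.
have hZe : Z = 1 - y0 - y1 - Y by rewrite /Y; lra.
have hg := g_bound h0 h1 hY.
have hD' := hD y0 Y h0 hY.
have hle1 : y0 * e <= y0 * (3/8 * Y ^+ 2) by apply: ler_wpM2l.
have hle2 : y1 * e <= y1 * (3/8 * Y ^+ 2) by apply: ler_wpM2l.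
have hle3 : y0 * W <= y0 * (Z ^+ 2 / 2) by apply: ler_wpM2l => //; lra.
have hb : y0 + y1 + Y <= 1 by rewrite /Y; lra.
have := hg hb (hD' (ltac:(lra))).
rewrite -hZe.
have -> : y1 * y2 + y1 * y3 + y1 * y4 + y1 * y5 + y2 * y3 + y2 * y4 + y2 * y5 + y3 * y4 + y3 * y5 + y4 * y5 + (y1 + y2 + y3 + y4 + y5) * Z + W
  = y1 * Y + e + (y1 + Y) * Z + W by rewrite /Y /e; ring.
move=> H. 
have : y0 * (y1 * Y + e + (y1 + Y) * Z + W) + y1 * (e + Y * Z) <=
   y0 * (y1 * Y + 3 / 8 * Y ^+ 2 + (y1 + Y) * Z + Z ^+ 2 / 2) + y1 * (3 / 8 * Y ^+ 2 + Y * Z).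
  rewrite -subr_le0.
  have -> : y0 * (y1 * Y + e + (y1 + Y) * Z + W) + y1 * (e + Y * Z) -
   (y0 * (y1 * Y + 3 / 8 * Y ^+ 2 + (y1 + Y) * Z + Z ^+ 2 / 2) + y1 * (3 / 8 * Y ^+ 2 + Y * Z))
   = (y0 * e - y0 * (3 / 8 * Y ^+ 2)) + (y1 * e - y1 * (3 / 8 * Y ^+ 2)) + (y0 * W - y0 * (Z ^+ 2 / 2)) by ring.
  rewrite -!(subr_le0 (_ * _)) in hle1 hle2 hle3.
  by have := lerD (lerD hle1 hle2) hle3; rewrite !addr0.
lra.
Qed.

Ltac pos := match goal with
 | |- is_true (0 <= _ + _) => refine (addr_ge0 _ _); pos
 | |- is_true (0 <= _ * _) => refine (mulr_ge0 _ _); pos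
 | |- is_true (0 <= _ ^+ _) => refine (exprn_ge0 _ _); pos
 | |- _ => first [assumption | exact: ler0n | exact: ler01]
 end.

Lemma Dpos (R : realFieldType) (a Y : R) : 0 <= a -> 0 <= Y -> a + Y <= 1 ->
  Y^+2 * (1 - a - 5/8*Y)^+2 <= (2*a + 4*Y) * (19/200 - a*(1-a)^+2/2 + a*Y^+2/8 - Y^+3/27).
Proof.
move=> ha hY haY.
have hL : (0:R) < 43*1000+200 by lra.
have hw : 0 <= 1 - a - Y by lra.
pose w := 1 - a - Y.
have hw' : 0 <= w by [].
have E : (43*1000+200) * ((2*a + 4*Y) * (19/200 - a*(1-a)^+2/2 + a*Y^+2/8 - Y^+3/27) - Y^+2 * (1 - a - 5/8*Y)^+2) =
(16*1000+416) * (Y^+1 * w^+12) + (153*1000+792) * (Y^+2 * w^+11) + (662*1000+256) * (Y^+3 * w^+10) + ((1*1000+752)*1000+245) * (Y^+4 * w^+9) + ((3*1000+218)*1000+445) * (Y^+5 * w^+8) + ((4*1000+387)*1000+572) * (Y^+6 * w^+7) + ((4*1000+594)*1000+884) * (Y^+7 * w^+6) + ((3*1000+718)*1000+422) * (Y^+8 * w^+5) + ((2*1000+277)*1000+270) * (Y^+9 * w^+4) + ((1*1000+8)*1000+420) * (Y^+10 * w^+3) + (299*1000+556) * (Y^+11 * w^+2) + (52*1000+317) * (Y^+12 * w^+1) + (3*1000+941) * (Y^+13) + (8*1000+208) * (a^+1 * w^+12) + (209*1000+88) * (a^+1 * Y^+1 * w^+11) + ((1*1000+369)*1000+440) * (a^+1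 * Y^+2 * w^+10) + ((4*1000+504)*1000+720) * (a^+1 * Y^+3 * w^+9) + ((9*1000+144)*1000+765) * (a^+1 * Y^+4 * w^+8) + ((12*1000+822)*1000+696) * (a^+1 * Y^+5 * w^+7) + ((13*1000+533)*1000+996) * (a^+1 * Y^+6 * w^+6) + ((11*1000+440)*1000+440) * (a^+1 * Y^+7 * w^+5) + ((7*1000+801)*1000+470) * (a^+1 * Y^+8 * w^+4) + ((4*1000+36)*1000+440) * (a^+1 * Y^+9 * w^+3) + ((1*1000+421)*1000+388) * (a^+1 * Y^+10 * w^+2) + (290*1000+808) * (a^+1 * Y^+11 * w^+1) + (24*1000+925) * (a^+1 * Y^+12) + (55*1000+296) * (a^+2 * w^+11) + (914*1000+112) * (a^+2 * Y^+1 * w^+10) + ((4*1000+555)*1000+440) * (a^+2 * Y^+2 * w^+9) + ((11*1000+97)*1000+360) * (a^+2 * Y^+3 * w^+8) + ((15*1000+390)*1000+900) * (a^+2 * Y^+4 * w^+7) + ((13*1000+250)*1000+412) * (a^+2 * Y^+5 * w^+6) + ((8*1000+569)*1000+764) * (a^+2 * Y^+6 * w^+5) + ((6*1000+228)*1000+540) * (a^+2 * Y^+7 * w^+4) + ((4*1000+908)*1000+60) * (a^+2 * Y^+8 * w^+3) + ((2*1000+679)*1000+300) * (a^+2 * Y^+9 * w^+2) + (778*1000+716) * (a^+2 * Y^+10 * w^+1) + (88*1000+452) * (a^+2 * Y^+11) + (152*1000+928) * (a^+3 * w^+10) + ((2*1000+30)*1000+400) * (a^+3 * Y^+1 * w^+9)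 + ((7*1000+860)*1000+240) * (a^+3 * Y^+2 * w^+8) + ((13*1000+337)*1000+280) * (a^+3 * Y^+3 * w^+7) + ((9*1000+757)*1000+860) * (a^+3 * Y^+4 * w^+6) + ((1*1000+345)*1000+176) * (a^+3 * Y^+5 * w^+5) + (661*1000+500) * (a^+3 * Y^+6 * w^+4) + ((5*1000+517)*1000+840) * (a^+3 * Y^+7 * w^+3) + ((5*1000+877)*1000+180) * (a^+3 * Y^+8 * w^+2) + ((2*1000+444)*1000+760) * (a^+3 * Y^+9 * w^+1) + (365*1000+748) * (a^+3 * Y^+10) + (250*1000+560) * (a^+4 * w^+9) + ((3*1000+123)*1000+360) * (a^+4 * Y^+1 * w^+8) + ((10*1000+912)*1000+320) * (a^+4 * Y^+2 * w^+7) + ((18*1000+328)*1000+800) * (a^+4 * Y^+3 * w^+6) + ((21*1000+219)*1000+30) * (a^+4 * Y^+4 * w^+5) + ((26*1000+29)*1000+710) * (a^+4 * Y^+5 * w^+4) + ((30*1000+434)*1000+460) * (a^+4 * Y^+6 * w^+3) + ((23*1000+108)*1000+220) * (a^+4 * Y^+7 * w^+2) + ((9*1000+255)*1000+150) * (a^+4 * Y^+8 * w^+1) + ((1*1000+481)*1000+430) * (a^+4 * Y^+9) + (434*1000+160) * (a^+5 * w^+8) + ((5*1000+588)*1000+352) * (a^+5 * Y^+1 * w^+7) + ((22*1000+425)*1000+984) * (a^+5 * Y^+2 * w^+6) + ((50*1000+635)*1000+872) * (a^+5 * Y^+3 * w^+5) + ((79*1000+58)*1000+70) * (a^+5 * Y^+4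 * w^+4) + ((87*1000+113)*1000+880) * (a^+5 * Y^+5 * w^+3) + ((62*1000+161)*1000+92) * (a^+5 * Y^+6 * w^+2) + ((24*1000+944)*1000+184) * (a^+5 * Y^+7 * w^+1) + ((4*1000+202)*1000+982) * (a^+5 * Y^+8) + ((1*1000+57)*1000+536) * (a^+6 * w^+7) + ((11*1000+684)*1000+736) * (a^+6 * Y^+1 * w^+6) + ((45*1000+632)*1000+160) * (a^+6 * Y^+2 * w^+5) + ((96*1000+757)*1000+920) * (a^+6 * Y^+3 * w^+4) + ((125*1000+435)*1000+940) * (a^+6 * Y^+4 * w^+3) + ((99*1000+19)*1000+116) * (a^+6 * Y^+5 * w^+2) + ((43*1000+306)*1000+956) * (a^+6 * Y^+6 * w^+1) + ((7*1000+970)*1000+820) * (a^+6 * Y^+7) + ((2*1000+140)*1000+992) * (a^+7 * w^+6) + ((18*1000+589)*1000+824) * (a^+7 * Y^+1 * w^+5) + ((60*1000+639)*1000+840) * (a^+7 * Y^+2 * w^+4) + ((102*1000+970)*1000+560) * (a^+7 * Y^+3 * w^+3) + ((98*1000+18)*1000+100) * (a^+7 * Y^+4 * w^+2) + ((49*1000+580)*1000+712) * (a^+7 * Y^+5 * w^+1) + ((10*1000+342)*1000+164) * (a^+7 * Y^+6) + ((2*1000+871)*1000+936) * (a^+8 * w^+5) + ((19*1000+375)*1000+200) * (a^+8 * Y^+1 * w^+4) + ((49*1000+299)*1000+840) * (a^+8 * Y^+2 * w^+3) + ((61*1000+516)*1000+80) * (a^+8 * Y^+3 * w^+2) + ((38*1000+64)*1000+285)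 * (a^+8 * Y^+4 * w^+1) + ((9*1000+344)*1000+781) * (a^+8 * Y^+5) + ((2*1000+507)*1000+760) * (a^+9 * w^+4) + ((12*1000+864)*1000+960) * (a^+9 * Y^+1 * w^+3) + ((23*1000+893)*1000+920) * (a^+9 * Y^+2 * w^+2) + ((19*1000+443)*1000+600) * (a^+9 * Y^+3 * w^+1) + ((5*1000+883)*1000+605) * (a^+9 * Y^+4) + ((1*1000+416)*1000+960) * (a^+10 * w^+3) + ((5*1000+247)*1000+936) * (a^+10 * Y^+1 * w^+2) + ((6*1000+342)*1000+192) * (a^+10 * Y^+2 * w^+1) + ((2*1000+529)*1000+616) * (a^+10 * Y^+3) + (498*1000+528) * (a^+11 * w^+2) + ((1*1000+194)*1000+48) * (a^+11 * Y^+1 * w^+1) + (706*1000+320) * (a^+11 * Y^+2) + (98*1000+496) * (a^+12 * w^+1) + (114*1000+912) * (a^+12 * Y^+1) + (8*1000+208) * (a^+13).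
  by rewrite /w; field.
have : 0 <= (43*1000+200) * ((2*a + 4*Y) * (19/200 - a*(1-a)^+2/2 + a*Y^+2/8 - Y^+3/27) - Y^+2 * (1 - a - 5/8*Y)^+2).
  clearbody w. rewrite E. clear E. pos.
by rewrite pmulr_rge0 // subr_ge0.
Qed.

Lemma prod3 (R : comNzRingType) n (x : 'I_n -> R) (i j k : 'I_n) : (i < j)%N -> (j < k)%N ->
  \prod_(l in [set i; j; k]) x l = x i * x j * x k.
Proof.
move=> hij hjk.
have -> : [set i; j; k] = i |: (j |: [set k]) by apply/setP => l; rewrite !inE orbA.
have nij : i != j by rewrite -val_eqE /=; apply/negP => /eqP h; lia.
have nik : i != k by rewrite -val_eqE /=; apply/negP => /eqP h; lia.
have njk : j != k by rewrite -val_eqE /=; apply/negP => /eqP h; lia.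
rewrite big_setU1 ?inE ?negb_or ?nij ?nik //= big_setU1 ?inE ?njk //= big_set1.
by rewrite mulrA.
Qed.

Lemma ord_to_nat3 (R : nmodType) n (f : nat -> nat -> nat -> R) :
  \sum_(i < n) \sum_(j < n) \sum_(k < n) f i j k =
  \sum_(0 <= i < n) \sum_(0 <= j < n) \sum_(0 <= k < n) f i j k.
Proof.
rewrite big_mkord; apply: eq_bigr => i _; rewrite big_mkord; apply: eq_bigr => j _.
by rewrite big_mkord.
Qed.

Lemma lag_bound (R : realType) m (hn : (6 <= m.+1)%N) (x : 'I_m.+1 -> R) :
  (forall i, 0 <= x i) -> \sum_(i < m.+1) x i = 1 -> lag_poly (H1 m.+1) x <= 19/200.
Proof.
move=> hx0 hx1.
pose y := fun l : nat => x (inord l).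
have hy0 : forall l, 0 <= y l by move=> l; exact: hx0.
rewrite /lag_poly sum3; last exact: cardH1.
apply: (@le_trans _ _ (\sum_(i < m.+1) \sum_(j < m.+1) \sum_(k < m.+1) Tt y i j k)).
  apply: ler_sum => i _; apply: ler_sum => j _; apply: ler_sum => k _.
  case: ifP => [/andP [/andP [hij hjk] hin] | _].
    have hcc := memH1 hij hjk hin.
    rewrite /Tt hij hjk /=. rewrite (_ : cc i j k = true) //.
    by rewrite prod3 // /y !inord_val.
  by rewrite /Tt; case: ifP => _ //; rewrite !mulr_ge0.
rewrite ord_to_nat3 key //.
have hs : \sum_(0 <= i < m.+1) y i = 1.
  by rewrite big_mkord -hx1; apply: eq_bigr => i _; rewrite /y inord_val.
rewrite sum6 // in hs.
have hZ : 0 <= \sum_(6 <= k < m.+1) y k by apply: sumr_ge0.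
have hW := E2 y hn.
apply: Vbound => //.
- move=> a Y ha hY haY; exact: Dpos.
- rewrite hW -[X in X <= _]add0r lerD2r; apply: sumr_ge0 => i _; exact: sqr_ge0.
Qed.

Theorem lemma4p10 (R : realType) (n : nat) (hn : (6 <= n)%N) :
  lagrangian R (H1 n) < Num.sqrt 3 / 18.
Proof.
have hc : (19/200 : R) < Num.sqrt 3 / 18.
  have h : (171/100 : R) < Num.sqrt 3.
    have e : (171/100 : R) = Num.sqrt ((171/100) ^+ 2) by rewrite sqrtr_sqr ger0_norm //; lra.
    rewrite e ltr_sqrt; lra.
  lra.
apply: le_lt_trans hc.
case: n hn => [//|m] hn.
rewrite /lagrangian; apply: ge_sup.
- exists (lag_poly (H1 m.+1) (fun _ => m.+1%:R^-1)), (fun _ => m.+1%:R^-1) => //.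
  split => [i|]; first by rewrite invr_ge0.
  by rewrite sumr_const card_ord -[_ *+ _]mulr_natr mulVf // pnatr_eq0.
- move=> _ [x [hx0 hx1] <-]; exact: lag_bound.
Qed.
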